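(* Let $n\ge 1$, $N=2^n$, and let $U$ be an $n$-qubit unitary, specified by a quantum circuit, with $U\ket{0}_n = \ket{\psi}_n = \sum_{j=0}^{N-1}\psi_j\ket{j}_n$ where $\psi_j\in\mathbb{C}$ and $\sum_j|\psi_j|^2=1$. Then one can construct a $(1, n+3, 0)$-block-encoding $U_A$ of the diagonal matrix $A = \mathrm{diag}(\psi_0,\dots,\psi_{N-1})$ with $O(n)$ circuit depth (in single- and two-qubit gates) and a total of $O(1)$ queries to a controlled-$U$ gate.
   Context: Block-encoding: for an $s$-qubit operator $A$, $\alpha,\epsilon\ge 0$ and $a\in\mathbb{N}$, an $(s+a)$-qubit unitary $V$ is an $(\alpha,a,\epsilon)$-block-encoding of $A$ if $\|A - \alpha(\bra{0}^{\otimes a}\otimes I)V(\ket{0}^{\otimes a}\otimes I)\|\le\epsilon$ (operator norm). *)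

(* Defs.v *)
From HB Require Import structures.
From mathcomp Require Import all_boot all_order all_algebra.
From mathcomp Require Import algC.
From mathcomp Require Import spectral.
Set Implicit Arguments. Unset Strict Implicit. Unset Printing Implicit Defensive.
Import Order.TTheory GRing.Theory Num.Theory Num.Def.
Local Open Scope ring_scope.

Definition adj {p q} (A : 'M[algC]_(p, q)) : 'M[algC]_(q, p) := (map_mx conjC A)^T.

Definition vnorm {d} (x : 'cV[algC]_d) : algC := sqrtC (\sum_i `|x i 0| ^+ 2).

Definition opnorm_le {p q} (M : 'M[algC]_(p, q)) (eps : algC) : Prop :=
  forall x : 'cV[algC]_q, vnorm (M *m x) <= eps * vnorm x.

(* Computational basis: index i of an m-qubit register, qubit 0 is the most
   significant bit.  [|0>^{a} (x) I_{2^s}] as a 2^(a+s) x 2^s matrix. *)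
Definition ket0_tens_id (a s : nat) : 'M[algC]_(2 ^ (a + s), 2 ^ s) :=
  \matrix_(i, j) ((i : nat) == (j : nat))%:R.

Definition block_encoding (s a : nat) (alpha eps : algC)
    (V : 'M[algC]_(2 ^ (a + s))) (A : 'M[algC]_(2 ^ s)) : Prop :=
  [/\ V \is unitarymx, 0 <= alpha, 0 <= eps &
      opnorm_le (A - alpha *: (adj (ket0_tens_id a s) *m V *m ket0_tens_id a s)) eps].

Arguments block_encoding : clear implicits.

Definition ket0 (n : nat) : 'cV[algC]_(2 ^ n) := \col_i ((i : nat) == 0%N)%:R.
Definition diag_of_state {d} (psi : 'cV[algC]_d) : 'M[algC]_d := diag_mx psi^T.

Definition qbit (m : nat) (q : 'I_m) (i : nat) : bool := odd (i %/ 2 ^ (m - q.+1))%N.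

Definition loc_index (m : nat) (s : seq 'I_m) (i : nat) : nat :=
  foldl (fun acc q => (acc.*2 + qbit q i)%N) 0%N s.

(* entry of a matrix, extended by 0 outside its range *)
Definition ent {p q} (A : 'M[algC]_(p, q)) (i j : nat) : algC :=
  match (insub i : option 'I_p), (insub j : option 'I_q) with
  | Some i', Some j' => A i' j'
  | _, _ => 0
  end.

(* the gate g (given by its entries on the local register s) acting on the
   qubits s of an m-qubit register, identity on the other qubits *)
Definition embed (m : nat) (s : seq 'I_m) (g : nat -> nat -> algC) : 'M[algC]_(2 ^ m) :=
  \matrix_(i, j) if [forall q : 'I_m, (q \notin s) ==> (qbit q i == qbit q j)]
                 then g (loc_index s i) (loc_index s j) else 0.

(* controlled-U (control is the first, most significant, local qubit) *)
Definition ctrl_ent (n : nat) (U : 'M[algC]_(2 ^ n)) (i j : nat) : algC :=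
  if ((i < 2 ^ n) && (j < 2 ^ n))%N then ((i == j)%:R)
  else if ((2 ^ n <= i) && (2 ^ n <= j))%N then ent U (i - 2 ^ n)%N (j - 2 ^ n)%N
  else 0.

(* Gates of an m-qubit circuit with an n-qubit oracle:
   arbitrary single-qubit gates, arbitrary two-qubit gates, and queries to
   controlled-U (control qubit c, targets t 0, ..., t (n-1)). *)
Inductive gate (n m : nat) : Type :=
| Gate1 of 'I_m & 'M[algC]_2
| Gate2 of 'I_m & 'I_m & 'M[algC]_4
| CtrlU of 'I_m & ('I_n -> 'I_m).

Definition gate_support n m (g : gate n m) : seq 'I_m :=
  match g with
  | Gate1 q _ => [:: q]
  | Gate2 q1 q2 _ => [:: q1; q2]
  | CtrlU c t => c :: [seq t k | k <- enum 'I_n]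
  end.

Definition gate_wf n m (g : gate n m) : Prop :=
  match g with
  | Gate1 _ G => G \is unitarymx
  | Gate2 q1 q2 G => q1 != q2 /\ G \is unitarymx
  | CtrlU c t => injective t /\ c \notin codom t
  end.

Definition gate_mx n m (U : 'M[algC]_(2 ^ n)) (g : gate n m) : 'M[algC]_(2 ^ m) :=
  match g with
  | Gate1 q G => embed [:: q] (ent G)
  | Gate2 q1 q2 G => embed [:: q1; q2] (ent G)
  | CtrlU c t => embed (c :: [seq t k | k <- enum 'I_n]) (ctrl_ent U)
  end.

Definition is_query n m (g : gate n m) : bool :=
  if g is CtrlU _ _ then true else false.

(* A circuit is a sequence of layers (time steps); the gates of a layer act on
   pairwise disjoint qubits.  Layers are applied left to right. *)
Definition circuit n m := seq (seq (gate n m)).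

Fixpoint all_prop {T} (P : T -> Prop) (s : seq T) : Prop :=
  if s is x :: s' then P x /\ all_prop P s' else True.

Definition layer_wf n m (L : seq (gate n m)) : Prop :=
  all_prop (@gate_wf n m) L /\ uniq (flatten [seq gate_support g | g <- L]).

Definition circuit_wf n m (C : circuit n m) : Prop := all_prop (@layer_wf n m) C.

Definition layer_mx n m (U : 'M[algC]_(2 ^ n)) (L : seq (gate n m)) : 'M[algC]_(2 ^ m) :=
  foldr (fun g M => gate_mx U g *m M) 1%:M L.

Definition circuit_mx n m (U : 'M[algC]_(2 ^ n)) (C : circuit n m) : 'M[algC]_(2 ^ m) :=
  foldl (fun M L => layer_mx U L *m M) 1%:M C.

Definition depth n m (C : circuit n m) : nat := size C.

Definition num_queries n m (C : circuit n m) : nat :=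
  \sum_(L <- C) count (@is_query n m) L.

(* Main.v *)
Require Import Defs.
From mathcomp Require Import all_boot all_order all_algebra.
From mathcomp Require Import algC.
From mathcomp Require Import spectral.
From mathcomp Require Import zify ring lra.
Set Implicit Arguments. Unset Strict Implicit. Unset Printing Implicit Defensive.
Import GRing.Theory Num.Theory.
Local Open Scope ring_scope.
Fixpoint Nn (k : nat) (f : nat -> bool) : nat :=
  if k is k'.+1 then (f 0%N + (Nn k' (fun p => f p.+1)).*2)%N else 0%N.

Lemma Nn_lt k f : (Nn k f < 2 ^ k)%N.
Proof.
elim: k f => [|k IH] f //=. have := IH (fun p => f p.+1). rewrite expnS. case: (f 0%N) => /=; lia.
Qed.

Lemma Nn_bit k f p : (p < k)%N -> odd (Nn k f %/ 2 ^ p) = f p.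
Proof.
elim: k f p => [|k IH] f [|p] //= Hp.
- by rewrite divn1 oddD odd_double addbF; case: (f 0%N).
- rewrite expnS divnMA (_ : (f 0%N + (Nn k (fun p => f p.+1)).*2) %/ 2 = Nn k (fun p => f p.+1))%N.
    by rewrite IH.
  by rewrite -muln2 divnDMl // divn_small ?add0n //; case: (f 0%N).
Qed.

Lemma Nn_ext k f g : (forall p, (p < k)%N -> f p = g p) -> Nn k f = Nn k g.
Proof.
elim: k f g => [|k IH] f g //= H. rewrite H // (IH _ (fun p => g p.+1)) // => p Hp. exact: H.
Qed.

Lemma Nn_eq k i : (i < 2 ^ k)%N -> Nn k (fun p => odd (i %/ 2 ^ p)) = i.
Proof.
elim: k i => [|k IH] i /=. by rewrite expn0; case: i.
move=> Hi. rewrite divn1.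
rewrite (Nn_ext (g := fun p => odd ((i %/ 2) %/ 2 ^ p))); last first.
  by move=> p _; rewrite expnS divnMA.
rewrite IH; last by move: Hi; rewrite expnS; lia.
rewrite -muln2 {3}(divn_eq i 2) modn2 addnC; by case: (odd i).
Qed.

Definition bt (m q i : nat) : bool := odd (i %/ 2 ^ (m - q.+1)).
Definition num (m : nat) (f : nat -> bool) : nat := Nn m (fun p => f (m - p.+1)%N).

Lemma num_lt m f : (num m f < 2 ^ m)%N.
Proof. exact: Nn_lt. Qed.

Lemma bt_num m f q : (q < m)%N -> bt m q (num m f) = f q.
Proof.
move=> Hq; rewrite /bt /num Nn_bit; last by lia.
congr f; lia.
Qed.

Lemma num_ext m f g : (forall q, (q < m)%N -> f q = g q) -> num m f = num m g.
Proof. move=> H; apply: Nn_ext => p Hp; apply: H; lia. Qed.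

Lemma num_bt m i : (i < 2 ^ m)%N -> num m (fun q => bt m q i) = i.
Proof.
move=> Hi; rewrite /num -[RHS](Nn_eq Hi); apply: Nn_ext => p Hp.
rewrite /bt; do 3 f_equal; lia.
Qed.

Lemma bits_inj m i j : (i < 2 ^ m)%N -> (j < 2 ^ m)%N ->
  (forall q, (q < m)%N -> bt m q i = bt m q j) -> i = j.
Proof.
move=> Hi Hj H; rewrite -(num_bt Hi) -(num_bt Hj); exact: num_ext.
Qed.

Definition Fa (a : nat) (bs : seq bool) : nat := foldl (fun acc (b : bool) => (acc.*2 + b)%N) a bs.
Definition F := Fa 0.

Lemma Fa_rcons a bs b : Fa a (rcons bs b) = ((Fa a bs).*2 + b)%N.
Proof. by rewrite /Fa foldl_rcons. Qed.

Lemma F_Nn bs : F bs = Nn (size bs) (fun p => nth false bs (size bs - p.+1)).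
Proof.
elim/last_ind: bs => [//|bs b IH].
rewrite /F Fa_rcons -/(F bs) IH size_rcons /= subSS subn0 nth_rcons ltnn eqxx.
rewrite addnC; congr (_ + _)%N; congr (_.*2); apply: Nn_ext => p Hp.
rewrite nth_rcons ifT //; lia.
Qed.

Lemma F_lt bs : (F bs < 2 ^ size bs)%N.
Proof. rewrite F_Nn; exact: Nn_lt. Qed.

Lemma F_bit bs p : (p < size bs)%N -> odd (F bs %/ 2 ^ (size bs - p.+1)) = nth false bs p.
Proof. move=> Hp; rewrite F_Nn Nn_bit; last by lia. congr nth; lia. Qed.

Lemma Fa_F a bs : Fa a bs = (a * 2 ^ size bs + F bs)%N.
Proof.
elim/last_ind: bs a => [|bs b IH] a; first by rewrite /F /Fa /= muln1 addn0.
rewrite /F !Fa_rcons IH -/(F bs) size_rcons expnS /Fa /=. rewrite -/(F bs) -!muln2; ring.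
Qed.

Definition bin (k l : nat) : seq bool := [seq odd (l %/ 2 ^ (k - p.+1)) | p <- iota 0 k].

Lemma size_bin k l : size (bin k l) = k.
Proof. by rewrite size_map size_iota. Qed.

Lemma nth_bin k l p : (p < k)%N -> nth false (bin k l) p = odd (l %/ 2 ^ (k - p.+1)).
Proof. by move=> Hp; rewrite (nth_map 0%N) ?size_iota // nth_iota. Qed.

Lemma F_bin k l : (l < 2 ^ k)%N -> F (bin k l) = l.
Proof.
move=> Hl; rewrite F_Nn size_bin -[RHS](Nn_eq Hl); apply: Nn_ext => p Hp.
rewrite nth_bin; last by lia. do 3 f_equal; lia.
Qed.

Lemma bin_F bs : bin (size bs) (F bs) = bs.
Proof.
apply: (@eq_from_nth _ false); first by rewrite size_bin.
move=> p; rewrite size_bin => Hp; rewrite nth_bin // F_bit //.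
Qed.

Lemma map_nth_index (T : eqType) (sv : seq T) (t : seq bool) :
  uniq sv -> size t = size sv -> [seq nth false t (index q sv) | q <- sv] = t.
Proof.
move=> Hu Hs; apply: (@eq_from_nth _ false); first by rewrite size_map.
move=> p; rewrite size_map => Hp.
case: sv Hu Hs Hp => [//|x sv'] Hu Hs Hp.
by rewrite (nth_map x) // index_uniq.
Qed.

Section Emb.
Variable m : nat.
Variable s : seq 'I_m.
Local Notation sv := (map val s).

Lemma loc_indexE i : loc_index s i = F [seq bt m q i | q <- sv].
Proof. rewrite /loc_index /F /Fa; elim: s 0%N => //= q s' IH a; exact: IH. Qed.

Lemma loc_lt i : (loc_index s i < 2 ^ size s)%N.
Proof. by rewrite loc_indexE -(size_map val s) -(size_map (bt m ^~ i)); exact: F_lt. Qed.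

Definition comb (i l : nat) : nat :=
  num m (fun q => if q \in sv then nth false (bin (size sv) l) (index q sv) else bt m q i).

Definition agree (i k : nat) : bool := [forall q : 'I_m, (q \notin s) ==> (qbit q i == qbit q k)].

Lemma agreeP i k : reflect (forall q, (q < m)%N -> q \notin sv -> bt m q i = bt m q k) (agree i k).
Proof.
apply: (iffP forallP) => H.
  move=> q Hq Hn; have := H (Ordinal Hq); rewrite (_ : (Ordinal Hq \notin s) = true).
    by move/eqP.
  apply: contra Hn => Hin; by apply/mapP; exists (Ordinal Hq).
move=> q; apply/implyP => Hn; apply/eqP; apply: H => //.
by rewrite mem_map //; exact: val_inj.
Qed.

Lemma comb_lt i l : (comb i l < 2 ^ m)%N.
Proof. exact: num_lt. Qed.

Lemma bt_comb i l q : (q < m)%N -> bt m q (comb i l) =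
  if q \in sv then nth false (bin (size sv) l) (index q sv) else bt m q i.
Proof. exact: bt_num. Qed.

Lemma loc_comb i l : uniq sv -> (l < 2 ^ size s)%N -> loc_index s (comb i l) = l.
Proof.
move=> Hu Hl; rewrite loc_indexE.
rewrite (@eq_in_map _ _ _ (fun q => nth false (bin (size sv) l) (index q sv)) sv).1; last first.
  move=> q Hq; have Hqm : (q < m)%N by move: Hq => /mapP [q0 _ ->]; exact: ltn_ord.
  by rewrite bt_comb // Hq.
rewrite (@map_nth_index _ sv (bin (size sv) l)) // ?size_bin // F_bin // size_map //.
Qed.

Lemma agree_comb i l : agree i (comb i l).
Proof.
apply/agreeP => q Hq Hn; by rewrite bt_comb // (negbTE Hn).
Qed.

Lemma agree_refl i : agree i i.
Proof. by apply/agreeP. Qed.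

Lemma agree_sym i k : agree i k = agree k i.
Proof. by apply/agreeP/agreeP => H q Hq Hn; rewrite H. Qed.

Lemma agree_trans i j k : agree i j -> agree j k -> agree i k.
Proof. by move=> /agreeP H1 /agreeP H2; apply/agreeP => q Hq Hn; rewrite H1 ?H2. Qed.

Lemma comb_loc i k : (k < 2 ^ m)%N -> agree i k -> comb i (loc_index s k) = k.
Proof.
move=> Hk /agreeP H; apply: bits_inj; [exact: comb_lt | exact: Hk | ].
move=> q Hq; rewrite bt_comb //; case: ifP => Hin; last by rewrite H // Hin.
rewrite loc_indexE -(size_map (bt m ^~ k)) bin_F (nth_map 0%N); last by rewrite index_mem.
by rewrite nth_index.
Qed.

Lemma comb_agree i j l : agree i j -> comb i l = comb j l.
Proof.
move=> /agreeP H; apply: num_ext => q Hq; case: ifP => Hin //; by rewrite H // Hin.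
Qed.

End Emb.

Lemma entE p q (A : 'M[algC]_(p, q)) (i : 'I_p) (j : 'I_q) : ent A i j = A i j.
Proof. by rewrite /ent !valK. Qed.

Lemma ent_ord p q (A : 'M[algC]_(p, q)) x (Hx : (x < p)%N) y (Hy : (y < q)%N) :
  ent A x y = A (Ordinal Hx) (Ordinal Hy).
Proof. by rewrite -entE. Qed.

Section Emb2.
Variable m : nat.
Variable s : seq 'I_m.
Local Notation sv := (map val s).
Local Notation loc := (loc_index s).

Lemma embedE g (i k : 'I_(2 ^ m)) :
  embed s g i k = if agree s i k then g (loc i) (loc k) else 0.
Proof. by rewrite mxE. Qed.

Lemma reindex_agree (H : nat -> algC) (i : nat) : uniq sv ->
  \sum_(k < 2 ^ m) (if agree s i k then H (loc k) else 0) = \sum_(l < 2 ^ size s) H l.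
Proof.
move=> Hu.
transitivity (\sum_(k < 2 ^ m) \sum_(l < 2 ^ size s) ((k : nat) == comb s i l)%:R * H l).
  apply: eq_bigr => k _; case: ifP => Hag.
    rewrite (bigD1 (Ordinal (loc_lt s k))) //= comb_loc // eqxx mul1r big1 ?addr0 //.
    move=> l Hl; case: eqP => [Hk|]; last by rewrite mul0r.
    move: Hl; rewrite -val_eqE /= Hk loc_comb //; by rewrite eqxx.
  rewrite big1 // => l _; case: eqP => [Hk|]; last by rewrite mul0r.
  by move: Hag; rewrite Hk agree_comb.
rewrite exchange_big; apply: eq_bigr => l _; rewrite -mulr_suml.
rewrite (bigD1 (Ordinal (comb_lt s i l))) //= eqxx big1 ?addr0 ?mul1r //.
move=> k Hk; case: eqP => // Hk'; move: Hk; by rewrite -val_eqE /= Hk' eqxx.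
Qed.

Lemma embed_unitary (G : 'M[algC]_(2 ^ size s)) :
  uniq sv -> G \is unitarymx -> embed s (ent G) \is unitarymx.
Proof.
move=> Hu /unitarymxP HG; apply/unitarymxP/matrixP => i j.
rewrite !mxE.
case: (boolP (agree s i j)) => Hij; have Hji : agree s j i = agree s i j by rewrite agree_sym.
  rewrite (eq_bigr (fun k : 'I_(2 ^ m) => if agree s i k then
      (ent G (loc i) (loc k) * (ent G (loc j) (loc k))^*)%R else 0)); last first.
    move=> k _; rewrite !mxE -/(agree s i k) -/(agree s j k); case: ifP => Hik.
      by rewrite (agree_trans (etrans Hji Hij) Hik).
    by rewrite mul0r.
  rewrite (reindex_agree (fun l => ent G (loc i) l * (ent G (loc j) l)^*)) //.
  have := congr1 (fun M : 'M[algC]_(2 ^ size s) => M (Ordinal (loc_lt s i)) (Ordinal (loc_lt s j))) HG.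
  rewrite !mxE; under eq_bigr do rewrite !mxE; move=> HG'.
  have E : (Ordinal (loc_lt s i) == Ordinal (loc_lt s j)) = (i == j).
    rewrite -val_eqE /= -[RHS]val_eqE /=; apply/eqP/eqP => [E|->] //.
    by rewrite -(comb_loc (ltn_ord i) (agree_refl s i)) E (comb_agree _ Hij) comb_loc // agree_refl.
  rewrite -E -HG'; by apply: eq_bigr => l _; rewrite -!entE.
rewrite big1; last first.
  move=> k _; rewrite !mxE -/(agree s i k) -/(agree s j k); case: ifP => Hik; case: ifP => Hjk; rewrite ?conjC0 ?mul0r ?mulr0 //.
  by move: Hij; rewrite (agree_trans Hik (etrans (agree_sym _ _ _) Hjk)).
suff -> : (i == j) = false by []. by apply/negbTE; apply: contra Hij => /eqP ->; exact: agree_refl.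
Qed.

End Emb2.

Section Emb3.
Variable m : nat.
Variable s : seq 'I_m.
Local Notation sv := (map val s).
Local Notation loc := (loc_index s).

Lemma embed_perm_row (g : nat -> nat -> algC) (pi : nat -> nat) (i k : 'I_(2 ^ m)) :
  uniq sv ->
  (forall a b, (a < 2 ^ size s)%N -> (b < 2 ^ size s)%N -> g a b = (b == pi a)%:R) ->
  (forall a, (a < 2 ^ size s)%N -> (pi a < 2 ^ size s)%N) ->
  embed s g i k = ((k : nat) == comb s i (pi (loc i)))%:R.
Proof.
move=> Hu Hg Hpi; rewrite embedE; case: ifP => Hag.
  rewrite Hg ?loc_lt //; congr ((nat_of_bool _)%:R); apply/eqP/eqP => E.
    by rewrite -E comb_loc.
  by rewrite E loc_comb // Hpi // loc_lt.
case: eqP => // E; by move: Hag; rewrite E agree_comb.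
Qed.

Lemma embed_sym (g : nat -> nat -> algC) (i k : 'I_(2 ^ m)) :
  (forall a b, g a b = g b a) -> embed s g i k = embed s g k i.
Proof. by move=> Hg; rewrite !embedE agree_sym Hg. Qed.

End Emb3.

Lemma mul_row_delta p q r (M : 'M[algC]_(p, q)) (R : 'M[algC]_(q, r)) (a : 'I_p) (b : 'I_r) (c0 : 'I_q) :
  (forall c : 'I_q, M a c = ((c : nat) == c0)%:R) -> (M *m R) a b = R c0 b.
Proof.
move=> H; rewrite mxE (bigD1 c0) //= H eqxx mul1r big1 ?addr0 // => c Hc.
by rewrite H (negbTE (Hc : (c:nat) != c0)) mul0r.
Qed.

Lemma mul_col_delta p q r (M : 'M[algC]_(p, q)) (R : 'M[algC]_(q, r)) (a : 'I_p) (b : 'I_r) (c0 : 'I_q) :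
  (forall c : 'I_q, R c b = ((c : nat) == c0)%:R) -> (M *m R) a b = M a c0.
Proof.
move=> H; rewrite mxE (bigD1 c0) //= H eqxx mulr1 big1 ?addr0 // => c Hc.
by rewrite H (negbTE (Hc : (c:nat) != c0)) mulr0.
Qed.

Definition Xmx : 'M[algC]_2 := \matrix_(a, b) ((a : nat) != b)%:R.
Definition cn (a : nat) : nat := if (a < 2)%N then a else (5 - a)%N.
Definition CNOTmx : 'M[algC]_4 := \matrix_(a, b) ((b : nat) == cn a)%:R.

Lemma ent_X a b : (a < 2)%N -> (b < 2)%N -> ent Xmx a b = (b == (1 - a)%N)%:R.
Proof.
move=> Ha Hb; rewrite ent_ord mxE /=; congr (_%:R).
by case: a Ha => [|[|]] //; case: b Hb => [|[|]].
Qed.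

Lemma ent_X_sym a b : ent Xmx a b = ent Xmx b a.
Proof.
rewrite /ent; case: insubP => [a' _ Ea|]; case: insubP => [b' _ Eb|] //=.
by rewrite !mxE eq_sym.
Qed.

Lemma ent_CNOT a b : (a < 4)%N -> (b < 4)%N -> ent CNOTmx a b = (b == cn a)%:R.
Proof. by move=> Ha Hb; rewrite ent_ord mxE. Qed.

Lemma Xmx_unitary : Xmx \is unitarymx.
Proof.
apply/unitarymxP/matrixP => i j; rewrite !mxE big_ord_recl big_ord1 !mxE.
by case: i => [[|[|?]] ?] //=; case: j => [[|[|?]] ?] //=; rewrite ?conjC0 ?conjC1 ?mulr0 ?mul0r ?mulr1 ?addr0 ?add0r.
Qed.

Lemma CNOTmx_unitary : CNOTmx \is unitarymx.
Proof.
apply/unitarymxP/matrixP => i j; rewrite !mxE !big_ord_recl big_ord0 !mxE /=.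
by case: i => [[|[|[|[|?]]]] ?] //=; case: j => [[|[|[|[|?]]]] ?] //=;
  rewrite ?conjC0 ?conjC1 ?mulr0 ?mul0r ?mulr1 ?addr0 ?add0r.
Qed.

Lemma mpos n : (0 < (n + 3) + n)%N.
Proof. lia. Qed.

Definition qq n k : 'I_((n + 3) + n) := Ordinal (ltn_pmod k (mpos n)).

Lemma qqE n k : (k < (n + 3) + n)%N -> (qq n k : nat) = k.
Proof. by move=> Hk; rewrite /= modn_small. Qed.

Definition Xg n : gate n ((n + 3) + n) := Gate1 n (qq n 0) Xmx.
Definition CUg n : gate n ((n + 3) + n) := CtrlU (qq n 0) (fun k : 'I_n => qq n (3 + k)).
Definition CXg n k : gate n ((n + 3) + n) := Gate2 n (qq n (n + 3 + k)) (qq n (3 + k)) CNOTmx.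
Definition Cq n : circuit n ((n + 3) + n) :=
  [:: [:: Xg n]; [:: CUg n]; [seq CXg n k | k <- iota 0 n]; [:: Xg n]].

Lemma Cq_depth n : (1 <= n)%N -> (depth (Cq n) <= 4 * n)%N.
Proof. rewrite /depth /=; lia. Qed.

Lemma Cq_queries n : (num_queries (Cq n) <= 1)%N.
Proof.
rewrite /num_queries /Cq !big_cons big_nil /=.
suff -> : count (@is_query n _) [seq CXg n k | k <- iota 0 n] = 0%N by [].
by elim: (iota 0 n) => //.
Qed.

Lemma uniq_flat2 (f g : nat -> nat) (ks : seq nat) :
  uniq ks -> (forall a b, a \in ks -> b \in ks -> f a = f b -> a = b) ->
  (forall a b, a \in ks -> b \in ks -> g a = g b -> a = b) ->
  (forall a b, a \in ks -> b \in ks -> f a != g b) ->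
  uniq (flatten [seq [:: f k; g k] | k <- ks]).
Proof.
elim: ks => [//|k ks IH] /= /andP [Hk Hu] Hf Hg Hfg.
have Hin : forall x, x \in flatten [seq [:: f k0; g k0] | k0 <- ks] ->
    exists2 k', k' \in ks & (x == f k') || (x == g k').
  by move=> x /flattenP [y /mapP [k' Hk' ->]]; rewrite !inE => Hx; exists k'.
have kin : k \in k :: ks by rewrite inE eqxx.
have sub : forall x, x \in ks -> x \in k :: ks by move=> x Hx; rewrite inE Hx orbT.
rewrite IH //; first last.
- by move=> a b Ha Hb; apply: Hfg; apply: sub.
- by move=> a b Ha Hb; apply: Hg; apply: sub.
- by move=> a b Ha Hb; apply: Hf; apply: sub.
rewrite andbT !inE negb_or Hfg //=; apply/andP; split.
  apply/negP => /Hin [k' Hk' /orP [] /eqP E].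
    by move: Hk; rewrite (Hf _ _ kin (sub _ Hk') E) Hk'.
  by move: (Hfg k k' kin (sub _ Hk')); rewrite E eqxx.
apply/negP => /Hin [k' Hk' /orP [] /eqP E].
  by move: (Hfg k' k (sub _ Hk') kin); rewrite E eqxx.
by move: Hk; rewrite (Hg _ _ kin (sub _ Hk') E) Hk'.
Qed.

Lemma Cq_wf n : (1 <= n)%N -> circuit_wf (Cq n).
Proof.
move=> Hn.
have HX : layer_wf [:: Xg n] by split => //=; split => //; exact: Xmx_unitary.
split => //; split; [|split; [|split => //]].
- split => /=.
    split => //; split.
      move=> a b E; have Ha := ltn_ord a; have Hb := ltn_ord b; move: E.
      move/(congr1 (@nat_of_ord _)); rewrite !qqE; try lia; move=> E; apply: ord_inj; lia.
    apply/negP => /codomP [k /(congr1 (@nat_of_ord _))]; have Hk := ltn_ord k; rewrite !qqE; lia.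
  rewrite cats0 /=; apply/andP; split.
    apply/negP => /mapP [k _ /(congr1 (@nat_of_ord _))]; have Hk := ltn_ord k; rewrite !qqE; lia.
  rewrite map_inj_uniq ?enum_uniq // => a b E; have Ha := ltn_ord a; have Hb := ltn_ord b; move: E.
  move/(congr1 (@nat_of_ord _)); rewrite !qqE; try lia; move=> E; apply: ord_inj; lia.
- split.
    have : all (fun k => k < n)%N (iota 0 n) by apply/allP => k; rewrite mem_iota; lia.
    elim: (iota 0 n) => //= k ks IH /andP [Hk Hks]; split; last exact: IH.
    split; last exact: CNOTmx_unitary.
    by rewrite -val_eqE /= !modn_small; lia.
  have -> : [seq gate_support g | g <- [seq CXg n k | k <- iota 0 n]] =
     [seq [:: qq n (n + 3 + k); qq n (3 + k)] | k <- iota 0 n] by rewrite -map_comp.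
  apply: (@map_uniq _ _ (@nat_of_ord _)); rewrite map_flatten -map_comp.
  rewrite (@eq_in_map _ _ _ (fun k => [:: (n + 3 + k)%N; (3 + k)%N]) (iota 0 n)).1; last first.
    move=> k; rewrite mem_iota => Hk /=; rewrite !modn_small //; lia.
  apply: (@uniq_flat2 (fun k => n + 3 + k)%N (fun k => 3 + k)%N); first exact: iota_uniq.
  - move=> a b _ _; lia.
  - move=> a b _ _; lia.
  move=> a b; rewrite !mem_iota => Ha Hb; apply/eqP; lia.
Qed.

Lemma sum_delta N a (F : nat -> algC) : (a < N)%N -> \sum_(l < N) ((a == l)%:R * F l) = F a.
Proof.
move=> Ha; rewrite (bigD1 (Ordinal Ha)) //= eqxx mul1r big1 ?addr0 // => l Hl.
by rewrite eq_sym (negbTE (Hl : (l : nat) != a)) mul0r.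
Qed.

Lemma c_lo n (U : 'M[algC]_(2 ^ n)) a l : (l < 2 ^ n)%N ->
  ctrl_ent U a l = if (a < 2 ^ n)%N then (a == l)%:R else 0.
Proof. move=> Hl; have H2 : (2 ^ n <= l)%N = false by rewrite leqNgt Hl. by rewrite /ctrl_ent Hl H2 andbT andbF. Qed.

Lemma c_hi n (U : 'M[algC]_(2 ^ n)) a l : (l < 2 ^ n)%N ->
  ctrl_ent U a (l + 2 ^ n) = if (a < 2 ^ n)%N then 0 else ent U (a - 2 ^ n) l.
Proof.
move=> Hl; rewrite /ctrl_ent addnK.
have -> : (l + 2 ^ n < 2 ^ n)%N = false by lia.
rewrite andbF leq_addl andbT; case: ltnP => //.
Qed.

Lemma ctrl_unitary n (U : 'M[algC]_(2 ^ n)) k : k = n.+1 -> U \is unitarymx ->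
  (\matrix_(a, b) ctrl_ent U a b : 'M[algC]_(2 ^ k)) \is unitarymx.
Proof.
move=> -> /unitarymxP HU; apply/unitarymxP/matrixP => a b; rewrite !mxE.
under eq_bigr do rewrite !mxE.
have E2 : (2 ^ n.+1 = 2 ^ n + 2 ^ n)%N by rewrite expnS; lia.
have Ha : (a < 2 ^ n + 2 ^ n)%N by rewrite -E2.
have Hb : (b < 2 ^ n + 2 ^ n)%N by rewrite -E2.
set F := fun l => ctrl_ent U a l * (ctrl_ent U b l)^*.
rewrite -(big_mkord xpredT F).
rewrite (big_cat_nat _ (n:=(2^n)%N)) //=; last by lia.
have -> : \sum_((2 ^ n)%N <= l < (2 ^ n.+1)%N) F l = \sum_(l < (2 ^ n)%N) F (l + 2 ^ n)%N.
  rewrite -{1}(add0n (2 ^ n)%N) big_addn big_mkord.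
  have -> : (2 ^ n.+1 - 2 ^ n = 2 ^ n)%N by lia.
  done.
rewrite big_mkord /F.
under eq_bigr => l _ do rewrite !(c_lo _ _ (ltn_ord l)).
under [X in _ + X = _]eq_bigr => l _ do rewrite !(c_hi _ _ (ltn_ord l)).
case: (ltnP a (2 ^ n)) => Ha'; case: (ltnP b (2 ^ n)) => Hb'.
- rewrite [X in _ + X]big1 ?addr0; last by move=> *; rewrite conjC0 mulr0.
  under eq_bigr do rewrite conjC_nat.
  by rewrite (@sum_delta _ a (fun l => ((b : nat) == l)%:R)) // eq_sym.
- have -> : (a == b :> 'I_ _) = false by apply/negbTE; rewrite -val_eqE /=; apply/eqP; lia.
  by rewrite !big1 ?addr0 // => *; rewrite ?conjC0 ?mul0r ?mulr0.
- have -> : (a == b :> 'I_ _) = false by apply/negbTE; rewrite -val_eqE /=; apply/eqP; lia.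
  by rewrite !big1 ?addr0 // => *; rewrite ?conjC0 ?mul0r ?mulr0.
rewrite [X in X + _]big1 ?add0r; last by move=> *; rewrite mul0r.
have Ha2 : (a - 2 ^ n < 2 ^ n)%N by lia.
have Hb2 : (b - 2 ^ n < 2 ^ n)%N by lia.
have := congr1 (fun M : 'M[algC]_(2 ^ n) => M (Ordinal Ha2) (Ordinal Hb2)) HU.
rewrite !mxE; under eq_bigr do rewrite ?mxE; move=> HU'.
have -> : (a == b :> 'I_ _) = (Ordinal Ha2 == Ordinal Hb2).
  rewrite -!val_eqE /=; apply/eqP/eqP; lia.
rewrite -HU'; by apply: eq_bigr => l _; rewrite !mxE -!entE.
Qed.

Lemma gate_unitary n m (U : 'M[algC]_(2 ^ n)) (g : gate n m) :
  U \is unitarymx -> gate_wf g -> uniq (gate_support g) -> gate_mx U g \is unitarymx.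
Proof.
move=> HU; have Hv : forall s : seq 'I_m, uniq s -> uniq (map val s)
  by move=> s Hs; rewrite map_inj_uniq //; exact: val_inj.
case: g => [q G | q1 q2 G | c t] Hwf Hu.
- by apply: (@embed_unitary _ [:: q] G).
- case: Hwf => H12 HG; apply: (@embed_unitary _ [:: q1; q2] G) => //=.
rewrite /=.
set s := c :: [seq t k | k <- enum 'I_n].
have Hs : size s = n.+1 by rewrite /= size_map size_enum_ord.
pose G : 'M[algC]_(2 ^ size s) := \matrix_(a, b) ctrl_ent U a b.
have -> : embed s (ctrl_ent U) = embed s (ent G).
  apply/matrixP => i k; rewrite !embedE; case: ifP => // _.
  by rewrite (ent_ord _ (loc_lt s i) (loc_lt s k)) mxE.
apply: embed_unitary; first exact: Hv.
exact: ctrl_unitary.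
Qed.

Lemma layer_unitary n m (U : 'M[algC]_(2 ^ n)) (L : seq (gate n m)) :
  U \is unitarymx -> layer_wf L -> layer_mx U L \is unitarymx.
Proof.
move=> HU [Hwf Hu]; elim: L Hwf Hu => [|g L IH] Hwf Hu.
  apply/unitarymxP; rewrite /layer_mx /= mul1mx.
  by apply/matrixP => i j; rewrite !mxE conjC_nat eq_sym.
rewrite cat_uniq in Hu; case/and3P: Hu => Hg _ HL.
apply: mul_unitarymx; first exact: gate_unitary Hwf.1 Hg.
exact: IH Hwf.2 HL.
Qed.

Lemma circuit_unitary n m (U : 'M[algC]_(2 ^ n)) (C : circuit n m) :
  U \is unitarymx -> circuit_wf C -> circuit_mx U C \is unitarymx.
Proof.
move=> HU; rewrite /circuit_mx.
have : (1%:M : 'M[algC]_(2 ^ m)) \is unitarymx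
  by apply/unitarymxP; rewrite mul1mx; apply/matrixP => i j; rewrite !mxE conjC_nat eq_sym.
elim: C (1%:M : 'M[algC]_(2 ^ m)) => [|L C IH] M //= HM [HL HC].
apply: IH => //; apply: mul_unitarymx => //; exact: layer_unitary.
Qed.

Section Main.
Variable n : nat.
Hypothesis Hn : (1 <= n)%N.
Local Notation m := (n + 3 + n)%N.
Local Notation sX := [:: qq n 0].
Local Notation sCX k := [:: qq n (n + 3 + k); qq n (3 + k)].
Local Notation sCU := (qq n 0 :: [seq qq n (3 + nat_of_ord k) | k : 'I_n <- enum 'I_n]).

Definition hX (i : nat) : nat := comb sX i (1 - loc_index sX i).
Definition hCX (k i : nat) : nat := comb (sCX k) i (cn (loc_index (sCX k) i)).

Lemma qq0 : (qq n 0 : nat) = 0%N.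
Proof. by rewrite qqE //; lia. Qed.

Lemma loc_sX i : loc_index sX i = bt m 0 i.
Proof. by rewrite loc_indexE /= mod0n. Qed.

Lemma bt_hX i q : (q < m)%N -> bt m q (hX i) = if q == 0%N then ~~ bt m 0 i else bt m q i.
Proof.
move=> Hq; rewrite /hX bt_comb // /= mod0n inE.
case: eqP => [->|] //=; rewrite loc_sX subnn expn0 divn1.
by case: (bt m 0 i).
Qed.

Lemma X_row U (i c : 'I_(2 ^ m)) : gate_mx U (Xg n) i c = ((c : nat) == hX i)%:R.
Proof.
rewrite /= (@embed_perm_row _ _ _ (fun a => 1 - a)%N) //.
- by move=> a b Ha Hb; rewrite ent_X.
- by move=> a Ha /=; lia.
Qed.

Lemma X_col U (i c : 'I_(2 ^ m)) : gate_mx U (Xg n) c i = ((c : nat) == hX i)%:R.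
Proof. by rewrite /= embed_sym ?X_row //; exact: ent_X_sym. Qed.

Lemma loc_sCX k i : (k < n)%N ->
  loc_index (sCX k) i = ((bt m (n + 3 + k) i).*2 + bt m (3 + k) i)%N.
Proof. by move=> Hk; rewrite loc_indexE /= !modn_small //; lia. Qed.

Lemma bt_hCX k i q : (k < n)%N -> (q < m)%N ->
  bt m q (hCX k i) = if q == (3 + k)%N then bt m (3 + k) i (+) bt m (n + 3 + k) i else bt m q i.
Proof.
move=> Hk Hq; rewrite /hCX bt_comb // /= !modn_small; try lia.
rewrite !inE loc_sCX //.
case: (q =P (n + 3 + k)%N) => [->|Hq1].
  have -> : (n + 3 + k == 3 + k)%N = false by apply/eqP; lia.
  rewrite /= eqxx /=.
  by case: (bt m (n + 3 + k) i); case: (bt m (3 + k) i).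
case: (q =P (3 + k)%N) => [->|Hq2].
  have -> : (n + 3 + k == 3 + k)%N = false by apply/eqP; lia.
  rewrite eqxx /=.
  by case: (bt m (n + 3 + k) i); case: (bt m (3 + k) i).
by [].
Qed.

Lemma CX_row U k (i c : 'I_(2 ^ m)) : (k < n)%N ->
  gate_mx U (CXg n k) i c = ((c : nat) == hCX k i)%:R.
Proof.
move=> Hk; rewrite /= (@embed_perm_row _ _ _ cn) //.
- by rewrite /= !modn_small ?inE; try lia; rewrite andbT; apply/eqP; lia.
- by move=> a b Ha Hb; rewrite ent_CNOT.
- by move=> a /= Ha; rewrite /cn; case: ifP; lia.
Qed.

Lemma CX_layer_row U (ks : seq nat) (i c : 'I_(2 ^ m)) : all (fun k => k < n)%N ks ->
  layer_mx U [seq CXg n k | k <- ks] i c = ((c : nat) == foldl (fun x k => hCX k x) i ks)%:R.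
Proof.
elim: ks i => [|k ks IH] i /=.
  by rewrite /layer_mx /= mxE eq_sym.
move=> /andP [Hk Hks].
rewrite /layer_mx /= -/(layer_mx U _).
rewrite (@mul_row_delta _ _ _ _ _ _ _ (Ordinal (@comb_lt _ (sCX k) i (cn (loc_index (sCX k) i))))); last first.
  by move=> c'; rewrite CX_row.
by rewrite IH.
Qed.

Lemma bt_fold (ks : seq nat) i q : uniq ks -> all (fun k => k < n)%N ks -> (i < 2 ^ m)%N -> (q < m)%N ->
  bt m q (foldl (fun x k => hCX k x) i ks) =
  if (3 <= q)%N && ((q - 3)%N \in ks) then bt m q i (+) bt m (q + n) i else bt m q i.
Proof.
elim: ks i => [|k ks IH] i /=; first by rewrite andbF.
move=> /andP [Hk Hu] /andP [Hkn Hks] Hi Hq.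
rewrite IH //; last exact: comb_lt.
case: (q =P (3 + k)%N) => [Eq|Neq].
  subst q; rewrite leq_addr /= addKn (negbTE Hk) inE eqxx /=.
  rewrite bt_hCX // eqxx.
  by have -> : (3 + k + n = n + 3 + k)%N by lia.
rewrite (bt_hCX _ Hkn Hq) (introF eqP Neq).
case: (boolP (3 <= q)%N) => H3 //=.
rewrite inE.
have -> : (q - 3 == k)%N = false by apply/eqP; lia.
rewrite /=; case: ifP => // Hin.
have Hqn : (q - 3 < n)%N by move/allP: Hks => /(_ _ Hin).
rewrite bt_hCX //; last by lia.
by have -> : (q + n == 3 + k)%N = false by apply/eqP; lia.
Qed.

End Main.

Section Final.
Variable n : nat.
Hypothesis Hn : (1 <= n)%N.
Local Notation m := (n + 3 + n)%N.
Local Notation sCU := (qq n 0 :: [seq qq n (3 + nat_of_ord k) | k : 'I_n <- enum 'I_n]).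

Lemma circE U : circuit_mx U (Cq n) =
  gate_mx U (Xg n) *m (layer_mx U [seq CXg n k | k <- iota 0 n] *m (gate_mx U (CUg n) *m gate_mx U (Xg n))).
Proof. by rewrite /circuit_mx /= /layer_mx /= !mulmx1. Qed.

Lemma sv_CU : map val sCU = 0%N :: [seq (3 + k)%N | k <- iota 0 n].
Proof.
rewrite /= mod0n; congr (_ :: _).
rewrite -val_enum_ord -!map_comp; apply: eq_map => k /=; rewrite modn_small //; have := ltn_ord k; lia.
Qed.

Lemma mem_sv_CU q : (q \in map val sCU) = (q == 0%N) || ((3 <= q) && (q < n + 3))%N.
Proof.
rewrite sv_CU inE; congr (_ || _); apply/mapP/idP => [[k Hk ->]|/andP [H1 H2]].
  by move: Hk; rewrite mem_iota; lia.
by exists (q - 3)%N; [rewrite mem_iota; lia | lia].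
Qed.

Lemma loc_CU r : loc_index sCU r = (bt m 0 r * 2 ^ n + F [seq bt m (3 + k)%N r | k <- iota 0 n])%N.
Proof.
rewrite loc_indexE sv_CU /= /F /Fa /= -/(Fa _ _) Fa_F !size_map size_iota -map_comp.
by [].
Qed.

Lemma btJ_low J q : (J < 2 ^ n)%N -> (q < n + 3)%N -> bt m q J = false.
Proof.
move=> HJ Hq; rewrite /bt divn_small //; apply: (leq_trans HJ); rewrite leq_exp2l //; lia.
Qed.

Lemma fold_lt (ks : seq nat) i : (i < 2 ^ m)%N -> (foldl (fun x k => hCX n k x) i ks < 2 ^ m)%N.
Proof. elim: ks i => [|k ks IH] i Hi //=; apply: IH; exact: comb_lt. Qed.

Lemma all_iota : all (fun k => k < n)%N (iota 0 n).
Proof. by apply/allP => k; rewrite mem_iota; lia. Qed.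

Lemma bt_r1 j q : (q < m)%N -> (j < 2 ^ n)%N -> bt m q (hX n j) = (q == 0%N) || bt m q j.
Proof.
move=> Hq Hj; rewrite bt_hX //; case: eqP => [->|] //=; by rewrite btJ_low //; lia.
Qed.

Lemma bt_r2 j q : (q < m)%N -> (j < 2 ^ n)%N -> (j < 2 ^ m)%N ->
  bt m q (foldl (fun x k => hCX n k x) (hX n j) (iota 0 n)) =
  if (3 <= q)%N && (q < n + 3)%N then bt m (q + n) j else (q == 0%N) || bt m q j.
Proof.
move=> Hq Hj HJ; rewrite bt_fold ?iota_uniq ?all_iota //; last exact: comb_lt.
rewrite mem_iota add0n.
case: (boolP ((3 <= q)%N && (q < n + 3)%N)) => /andP.
  case=> H1 H2; have -> : (q - 3 < n)%N by lia.
  rewrite /= ?andbT ?H1 /= !bt_r1 //; try lia.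
  have -> : (q == 0%N) = false by apply/eqP; lia.
  have -> : (q + n == 0%N) = false by apply/eqP; lia.
  by rewrite btJ_low.
move=> H; have -> : (3 <= q)%N && (q - 3 < n)%N = false.
  by apply/negbTE/negP => /andP [H1 H2]; apply: H; split; lia.
by rewrite bt_r1.
Qed.

Lemma main_entry U j j' (Hj : (j < 2 ^ n)%N) (Hj' : (j' < 2 ^ n)%N) (HJ : (j < 2 ^ m)%N) (HJ' : (j' < 2 ^ m)%N) :
  circuit_mx U (Cq n) (Ordinal HJ) (Ordinal HJ') = if j == j' then ent U j 0 else 0.
Proof.
rewrite circE.
rewrite (@mul_row_delta _ _ _ _ _ _ _ (Ordinal (@comb_lt _ [:: qq n 0] j (1 - loc_index [:: qq n 0] j)))); last first.
  by move=> c; rewrite X_row.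
set r1 := hX n j.
have Hr1 : (r1 < 2 ^ m)%N by exact: comb_lt.
rewrite (@mul_row_delta _ _ _ _ _ _ _ (Ordinal (fold_lt (iota 0 n) Hr1))); last first.
  by move=> c; rewrite CX_layer_row // all_iota.
rewrite (@mul_col_delta _ _ _ _ _ _ _ (Ordinal (@comb_lt _ [:: qq n 0] j' (1 - loc_index [:: qq n 0] j')))); last first.
  by move=> c; rewrite X_col.
rewrite /= embedE /= -/(hX n j') /r1.
have Hag : agree sCU (foldl (fun x k => hCX n k x) (hX n j) (iota 0 n)) (hX n j') = (j == j').
  apply/agreeP/eqP => [H|<-].
    apply: (bits_inj (m := m)) => // q Hq.
    case: (ltnP q (n + 3)) => Hq3; first by rewrite !btJ_low.
    have := H q Hq; rewrite mem_sv_CU.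
    have -> : (q == 0%N) = false by apply/eqP; lia.
    have -> : (q < n + 3)%N = false by lia. rewrite andbF => /(_ isT).
    rewrite bt_r2 // bt_r1 //; try lia.
    have -> : (q == 0%N) = false by apply/eqP; lia.
    have -> : (q < n + 3)%N = false by lia. by rewrite andbF.
  move=> q Hq; rewrite mem_sv_CU negb_or => /andP [H0 H3].
  rewrite bt_r2 // (negbTE H3) // bt_r1 //; lia.
rewrite Hag; case: eqP => [E|] //; subst j'.
rewrite !loc_CU bt_r2 //; try lia.
rewrite bt_r1 //; try lia.
have -> : [seq bt m (3 + k) (foldl (fun x k => hCX n k x) (hX n j) (iota 0 n)) | k <- iota 0 n] = bin n j.
  rewrite /bin; apply/eq_in_map => k; rewrite mem_iota => Hk; rewrite bt_r2 //; try lia.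
  have -> : (2 < 3 + k < n + 3)%N by lia.
  rewrite /bt; do 3 f_equal; lia.
have -> : [seq bt m (3 + k) (hX n j) | k <- iota 0 n] = bin n 0.
  rewrite /bin; apply/eq_in_map => k; rewrite mem_iota => Hk; rewrite bt_r1 //; try lia.
  by rewrite btJ_low ?div0n //; lia.
rewrite !F_bin ?expn_gt0 // /= mul1n addn0 /ctrl_ent.
have -> : (2 ^ n + j < 2 ^ n)%N = false by lia.
by rewrite /= leq_addr leqnn addKn subnn.
Qed.

End Final.

Lemma opnorm0 p q : opnorm_le (0 : 'M[algC]_(p, q)) 0.
Proof.
move=> x; rewrite mul0mx mul0r /vnorm big1 ?sqrtC0 // => i _.
by rewrite mxE normr0 expr0n.
Qed.

Lemma block_main n (U : 'M[algC]_(2 ^ n)) : (1 <= n)%N ->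
  diag_of_state (U *m ket0 n) - 1 *: (adj (ket0_tens_id (n + 3) n) *m circuit_mx U (Cq n) *m ket0_tens_id (n + 3) n) = 0.
Proof.
move=> Hn; rewrite scale1r; apply/eqP; rewrite subr_eq0; apply/eqP/matrixP => j j'.
have Hle : (2 ^ n <= 2 ^ (n + 3 + n))%N by rewrite leq_exp2l //; lia.
have HJ : (j < 2 ^ (n + 3 + n))%N by apply: leq_trans Hle.
have HJ' : (j' < 2 ^ (n + 3 + n))%N by apply: leq_trans Hle.
rewrite (@mul_col_delta _ _ _ _ _ _ _ (Ordinal HJ')); last by move=> c; rewrite mxE.
rewrite (@mul_row_delta _ _ _ _ _ _ _ (Ordinal HJ)); last first.
  by move=> c; rewrite !mxE conjC_nat.
rewrite main_entry //.
have H0 : (0 < 2 ^ n)%N by rewrite expn_gt0.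
rewrite /diag_of_state mxE mxE (@mul_col_delta _ _ _ _ _ _ _ (Ordinal H0)); last by move=> c; rewrite mxE.
rewrite (ent_ord _ (ltn_ord j) H0).
have -> : Ordinal (ltn_ord j) = j by apply: val_inj.
case: (j =P j') => [->|Hne]; first by rewrite !eqxx mulr1n.
have /negbTE -> : (j : nat) != j' by apply/eqP => E; apply: Hne; apply: val_inj.
by rewrite mulr0n.
Qed.

Theorem theorem2 :
  exists cd cq : nat,
  forall n : nat, (1 <= n)%N ->
  exists C : circuit n ((n + 3) + n)%N,
    [/\ circuit_wf C,
        (depth C <= cd * n)%N,
        (num_queries C <= cq)%N &
        forall U : 'M[algC]_(2 ^ n), U \is unitarymx ->
          block_encoding n (n + 3)%N 1 0 (circuit_mx U C)
                         (diag_of_state (U *m ket0 n))].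
Proof.
exists 4%N, 1%N => n Hn; exists (Cq n); split.
- exact: Cq_wf.
- exact: Cq_depth.
- exact: Cq_queries.
move=> U HU; split.
- exact: circuit_unitary (Cq_wf Hn).
- exact: ler01.
- exact: Order.POrderTheory.lexx.
rewrite block_main //; exact: opnorm0.
Qed.
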